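(* Let $n\ge1$ be an integer and $\beta>0$, $J>0$, $H\in\mathbb{R}$. Let $P=S_3(123,321)=\{132,213,231,312\}\subset S_3$. For $\pi\in S_3$ let $\mathrm{CDdes}(\pi)=\mathrm{des}(\pi)+\mathrm{des}(\pi^{-1})$, where $\mathrm{des}(\pi)$ is the number of $i\in\{1,2\}$ with $\pi(i)>\pi(i+1)$; put $\phi(\alpha,\sigma)=1-\tfrac12\mathrm{CDdes}(\alpha^{-1}\sigma)$ and $\phi(\pi)=1-\tfrac12\mathrm{CDdes}(\pi)$. For $\vec\pi=(\pi^{(1)},\ldots,\pi^{(n)})\in P^n$ with $\pi^{(n+1)}:=\pi^{(1)}$, let $\mathcal{H}(\vec\pi)=-J\sum_{i=1}^n\phi(\pi^{(i)},\pi^{(i+1)})-H\sum_{i=1}^n\phi(\pi^{(i)})$ and $Z_n(\beta)=\sum_{\vec\pi\in P^n}\exp(-\beta\mathcal{H}(\vec\pi))$. Then $$Z_n(\beta)=e^{\beta Jn}\left(2(1-e^{-\beta J})^{n}(1+e^{-\beta J})^{n}+(1-e^{-\beta J})^{2n}+(1+e^{-\beta J})^{2n}\right),$$ and the free energy $f(\beta):=-\lim_{n\to\infty}\frac{1}{\beta n}\ln Z_n(\beta)$ equals $$f(\beta)=-J-\frac{2}{\beta}\ln\left(1+e^{-\beta J}\right).$$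
   Context: Permutations of $\{1,2,3\}$ are written in one-line notation $\pi(1)\pi(2)\pi(3)$ and composed as functions, $(\alpha^{-1}\sigma)(x)=\alpha^{-1}(\sigma(x))$. This is the 1D 3-permaspin model on a ring of $n$ sites with permaspins restricted to $P$, in an external field $H$. *)

(* Defs.v *)
From HB Require Import structures.
From mathcomp Require Import all_boot all_order all_algebra all_fingroup.
From mathcomp Require Import all_classical all_reals all_analysis.
Set Implicit Arguments. Unset Strict Implicit. Unset Printing Implicit Defensive.
Import Order.TTheory GRing.Theory Num.Theory.
Local Open Scope ring_scope.

(* Permutations of {1,2,3} are represented as {perm 'I_3} (0-indexed). *)
Notation S3 := {perm 'I_3}.

Definition i0 : 'I_3 := @Ordinal 3 0 isT.
Definition i1 : 'I_3 := @Ordinal 3 1 isT.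
Definition i2 : 'I_3 := @Ordinal 3 2 isT.

Definition des (p : S3) : nat :=
  ((p i1 < p i0)%N : nat) + ((p i2 < p i1)%N : nat).

Definition CDdes (p : S3) : nat := (des p + des (p^-1)%g)%N.

(* composition as functions: (comp f g) x = f (g x).  In mathcomp,
   (g * f)%g x = f (g x). *)
Definition pcomp (f g : S3) : S3 := (g * f)%g.

Definition phi2 {R : realType} (a s : S3) : R :=
  1 - (CDdes (pcomp (a^-1)%g s))%:R / 2.
Definition phi1 {R : realType} (p : S3) : R := 1 - (CDdes p)%:R / 2.

(* P = S_3(123,321): permutations of [3] containing neither the pattern
   123 (increasing) nor 321 (decreasing); in S_3 this means p is neither
   the increasing nor the decreasing one-line word. *)
Definition inP (p : S3) : bool :=
  ~~ ((p i0 < p i1)%N && (p i1 < p i2)%N) &&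
  ~~ ((p i1 < p i0)%N && (p i2 < p i1)%N).

Definition Ham {R : realType} (J H : R) (n : nat) (v : {ffun 'I_n -> S3}) : R :=
  - J * (\sum_(i < n) phi2 (v i) (v (ordS i)))
  - H * (\sum_(i < n) phi1 (v i)).

Definition Zn {R : realType} (J H beta : R) (n : nat) : R :=
  \sum_(v : {ffun 'I_n -> S3} | [forall i, inP (v i)])
     expR (- beta * Ham J H v).

(* Main.v *)
Require Import Defs.
From HB Require Import structures.
From mathcomp Require Import all_boot all_order all_algebra all_fingroup.
From mathcomp Require Import all_classical all_reals all_analysis.
From mathcomp Require Import ring lra.
Import Order.TTheory GRing.Theory Num.Theory.
Import numFieldNormedType.Exports.
Local Open Scope classical_set_scope.

Definition mkf (a b c : 'I_3) (i : 'I_3) : 'I_3 :=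
  if i == i0 then a else if i == i1 then b else c.

Definition fk (k : bool * bool) : 'I_3 -> 'I_3 :=
  match k with
  | (false, false) => mkf i0 i2 i1
  | (true, true) => mkf i1 i2 i0
  | (false, true) => mkf i1 i0 i2
  | (true, false) => mkf i2 i0 i1
  end.

Lemma ord3 (P : 'I_3 -> Prop) : P i0 -> P i1 -> P i2 -> forall i, P i.
Proof.
move=> H0 H1 H2 [[|[|[|m]]] Hm] //.
- by have -> : Ordinal Hm = i0 by apply: val_inj.
- by have -> : Ordinal Hm = i1 by apply: val_inj.
- by have -> : Ordinal Hm = i2 by apply: val_inj.
Qed.

Lemma fk_inj k : injective (fk k).
Proof. move=> x y; case: k => [[] []]; elim/ord3: x; elim/ord3: y => // /(congr1 val) //. Qed.

Definition dec (k : bool * bool) : S3 := perm (@fk_inj k).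

Definition code (p : S3) : bool * bool :=
  if p i0 == i0 then (false, false)
  else if p i0 == i2 then (true, false)
  else if p i1 == i2 then (true, true) else (false, true).

Lemma inv_val (p : S3) x :
  (p^-1)%g x = if p i0 == x then i0 else if p i1 == x then i1 else i2.
Proof.
have := permKV p x; move: ((p^-1)%g x) => y <-.
elim/ord3: y; rewrite !(inj_eq perm_inj) //.
Qed.

Definition inv' k y : 'I_3 :=
  if fk k i0 == y then i0 else if fk k i1 == y then i1 else i2.
Definition des' (g : 'I_3 -> 'I_3) : nat := ((g i1 < g i0)%N : nat) + ((g i2 < g i1)%N : nat).
Definition CD' a b := (des' (fun x => inv' a (fk b x)) + des' (fun x => inv' b (fk a x)))%N.
Definition dd (a b : bool * bool) : nat := ((a.1 != b.1) : nat) + ((a.2 != b.2) : nat).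

Lemma CD'_ok a b : CD' a b = (2 * dd a b)%N.
Proof. by case: a b => [[] []] [[] []]. Qed.

Lemma CD1_ok a : (des' (fk a) + des' (inv' a) = 2)%N.
Proof. by case: a => [[] []]. Qed.

Lemma CDdes_dec a b : CDdes (Defs.pcomp ((dec a)^-1)%g (dec b)) = (2 * dd a b)%N.
Proof.
rewrite -CD'_ok.
rewrite /CDdes /Defs.pcomp invMg invgK /des /CD' /des' !permM !inv_val !permE.
by [].
Qed.

Lemma CDdes_dec1 a : CDdes (dec a) = 2.
Proof.
rewrite -(CD1_ok a).
by rewrite /CDdes /des /des' !inv_val !permE.
Qed.

Lemma inP_dec a : inP (dec a).
Proof. by rewrite /inP !permE; case: a => [[] []]. Qed.

Lemma codeK a : code (dec a) = a.
Proof. by rewrite /code !permE; case: a => [[] []]. Qed.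

Lemma decK p : inP p -> dec (code p) = p.
Proof.
move=> Hp; apply/permP => i; rewrite permE.
have n01 : p i0 != p i1 by rewrite (inj_eq perm_inj).
have n02 : p i0 != p i2 by rewrite (inj_eq perm_inj).
have n12 : p i1 != p i2 by rewrite (inj_eq perm_inj).
move: Hp n01 n02 n12; rewrite /inP /code.
elim/ord3: i; move: (p i0) (p i1) (p i2) => a b c;
  elim/ord3: a; elim/ord3: b; elim/ord3: c; by [].
Qed.
Local Open Scope ring_scope.
Lemma const_of_pred (T : eqType) n (K : 'I_n.+1 -> T) :
  (forall i, K i = K (ord_pred i)) -> forall i, K i = K ord0.
Proof.
move=> HK [m Hm]; elim: m Hm => [|m IH] Hm; first by congr K; apply: val_inj.
rewrite HK -(IH (ltnW Hm)); congr K; apply: val_inj => /=.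
by rewrite /= modnDr modn_small // ltnW.
Qed.

Lemma transfer (R : comRingType) (S Kt : finType) (chi : Kt -> S -> R)
  (lam : Kt -> R) (c : R) n :
  (forall k l, \sum_s chi k s * chi l s = if k == l then c else 0) ->
  \sum_(u : {ffun 'I_n.+1 -> S})
     \prod_(i < n.+1) (\sum_k lam k * chi k (u i) * chi k (u (ordS i)))
  = c ^+ n.+1 * \sum_k lam k ^+ n.+1.
Proof.
move=> orth.
under eq_bigr => u _ do rewrite bigA_distr_bigA /=.
rewrite exchange_big /=.
transitivity (\sum_(K : {ffun 'I_n.+1 -> Kt})
   (\prod_i lam (K i)) * (if [forall i, K i == K (ord_pred i)] then c ^+ n.+1 else 0)).
  apply: eq_bigr => K _.
  transitivity (\sum_(u : {ffun 'I_n.+1 -> S}) (\prod_i lam (K i)) *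
     \prod_i (chi (K i) (u i) * chi (K (ord_pred i)) (u i))).
    apply: eq_bigr => u _.
    rewrite !big_split /= -mulrA; congr (_ * (_ * _)).
    rewrite [RHS](reindex_inj (@ordS_inj _)) /=.
    by apply: eq_bigr => i _; rewrite ordSK.
  rewrite -big_distrr /=; congr (_ * _).
  rewrite -(bigA_distr_bigA (fun i s => chi (K i) s * chi (K (ord_pred i)) s)) /=.
  under eq_bigr => i _ do rewrite orth.
  case: (boolP [forall i, _]) => [/forallP H|/forallPn [j Hj]].
    by rewrite -[X in c ^+ X]card_ord -prodr_const; apply: eq_bigr => i _; rewrite (eqP (H i)) eqxx.
  by rewrite (bigD1 j) //= ifN // mul0r.
rewrite big_distrr /=.
transitivity (\sum_k \sum_(K : {ffun 'I_n.+1 -> Kt})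
   (if K == [ffun=> k] then \prod_i lam (K i) * c ^+ n.+1 else 0)); last first.
  apply: eq_bigr => k _; rewrite -big_mkcond big_pred1_eq.
  by rewrite mulrC; congr (_ * _); rewrite -[X in _ ^+ X]card_ord -prodr_const;
     apply: eq_bigr => i _; rewrite ffunE.
rewrite exchange_big /=; apply: eq_bigr => K _.
case: (boolP [forall i, _]) => [/forallP H|HN].
  have HK := @const_of_pred _ _ (fun i => K i) (fun i => eqP (H i)).
  have E : K == [ffun=> K ord0] by apply/eqP/ffunP => i; rewrite ffunE HK.
  rewrite (bigD1 (K ord0)) /=; last exact: isT.
  rewrite E [X in _ = _ + X]big1; first by rewrite addr0.
  move=> k Hk; apply/ifN; apply: contra Hk => /eqP ->; by rewrite ffunE.
rewrite mulr0 big1; first reflexivity.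
move=> k _; apply/ifN; apply: contra HN => /eqP ->.
by apply/forallP => i; rewrite !ffunE.
Qed.

Section Part1.
Variable R : realType.

Definition mu (x : R) (b : bool) : R := if b then 1 - x else 1 + x.
Definition chi (k a : bool * bool) : R :=
  (-1) ^+ (k.1 && a.1) * (-1) ^+ (k.2 && a.2).
Definition lam (x : R) (k : bool * bool) : R := mu x k.1 * mu x k.2.

Lemma sum_pair (F : bool * bool -> R) :
  \sum_k F k = F (true, true) + F (true, false) + (F (false, true) + F (false, false)).
Proof.
rewrite (eq_bigr (fun k => F (k.1, k.2))); last by case.
by rewrite -(pair_bigA _ (fun a b => F (a, b))) /= !big_bool.
Qed.

Lemma w_dec (x : R) a b :
  x ^+ dd a b = 4^-1 * \sum_k lam x k * chi k a * chi k b.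
Proof.
apply: (@mulfI _ 4); first by rewrite pnatr_eq0.
rewrite mulrA mulfV ?pnatr_eq0 // mul1r.
rewrite sum_pair /lam /chi /mu /=.
by case: a b => [[] []] [[] []]; rewrite /dd /= ?expr0 ?expr1; ring.
Qed.

Lemma orth k l : \sum_s chi k s * chi l s = if k == l then 4 else 0 :> R.
Proof.
rewrite sum_pair /chi /=.
by case: k l => [[] []] [[] []]; rewrite /= ?andbT ?andbF ?expr0 ?expr1; ring.
Qed.

End Part1.
Arguments mu {R}. Arguments chi {R}. Arguments lam {R}.
Arguments w_dec {R}. Arguments orth {R}. Arguments sum_pair {R}.

Lemma Zn_eq (R : realType) (beta J H : R) m :
  Zn J H beta m.+1 =
  expR (beta * J) ^+ m.+1 * \sum_k lam (expR (- beta * J)) k ^+ m.+1.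
Proof.
set x := expR (- beta * J); set y := expR (beta * J).
rewrite /Zn.
rewrite (reindex (fun u : {ffun 'I_m.+1 -> bool * bool} => [ffun i => dec (u i)])); last first.
  exists (fun v : {ffun 'I_m.+1 -> S3} => [ffun i => code (v i)]) => u Hu.
    by apply/ffunP => i; rewrite !ffunE codeK.
  apply/ffunP => i; rewrite !ffunE decK //.
  by move: Hu; rewrite inE => /forallP /(_ i).
rewrite (eq_bigl xpredT); last first.
  by move=> u; apply/forallP => i; rewrite ffunE inP_dec.
transitivity (\sum_(u : {ffun 'I_m.+1 -> bool * bool})
   \prod_(i < m.+1) (y * 4^-1 * \sum_k lam x k * chi k (u i) * chi k (u (ordS i)))).
  apply: eq_bigr => u _.
  rewrite /Ham [X in H * X]big1; last first.
    by move=> i _; rewrite ffunE /phi1 CDdes_dec1 mulfV ?subrr // pnatr_eq0.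
  rewrite mulr0 subr0 mulNr mulNr mulrN opprK mulrA mulr_sumr expR_sum.
  apply: eq_bigr => i _.
  rewrite !ffunE /phi2 CDdes_dec natrM (mulrC 2) mulfK ?pnatr_eq0 //.
  rewrite -[RHS]mulrA -w_dec.
  have -> : beta * J * (1 - (dd (u i) (u (ordS i)))%:R) =
            beta * J + (dd (u i) (u (ordS i)))%:R * (- beta * J) by ring.
  by rewrite expRD expRM_natl.
under eq_bigr => u _ do rewrite big_split /= prodr_const card_ord.
rewrite -big_distrr /= (@transfer _ _ _ _ _ 4); last exact: orth.
rewrite mulrA -exprMn -mulrA mulVf ?pnatr_eq0 // mulr1.
by [].
Qed.

Lemma Zn_eq2 (R : realType) (beta J H : R) m :
  let x := expR (- beta * J) in
  let q := (1 - x) / (1 + x) in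
  1 + x != 0 ->
  Zn J H beta m.+1 =
  expR (beta * J) ^+ m.+1 * ((1 + x) ^+ m.+1 * (1 + q ^+ m.+1)) ^+ 2.
Proof.
move=> x q ax; rewrite Zn_eq sum_pair /lam /mu /= -/x.
have -> : 1 - x = q * (1 + x) by rewrite /q divfK.
set a := 1 + x.
rewrite !exprMn; set A := a ^+ m.+1; set Q := q ^+ m.+1.
ring.
Qed.

Theorem theorem3 (R : realType) (beta J H : R) (hbeta : 0 < beta) (hJ : 0 < J) :
  (forall n : nat, (1 <= n)%N ->
     Zn J H beta n =
     expR (beta * J * n%:R) *
       (2 * (1 - expR (- beta * J)) ^+ n * (1 + expR (- beta * J)) ^+ n
        + (1 - expR (- beta * J)) ^+ (2 * n)
        + (1 + expR (- beta * J)) ^+ (2 * n)))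
  /\
  (fun n : nat => - (ln (Zn J H beta n) / (beta * n%:R))) @ \oo -->
     (- J - 2 / beta * ln (1 + expR (- beta * J))).
Proof.
set x := expR (- beta * J).
have x0 : 0 < x by apply: expR_gt0.
have x1 : x < 1 by rewrite expR_lt1 mulNr oppr_lt0 mulr_gt0.
have a0 : 0 < 1 + x by lra.
have b0 : 0 < 1 - x by lra.
split.
  case=> // m _; rewrite Zn_eq sum_pair /lam /mu /= -/x expRM_natr.
  rewrite mul2n -addnn !exprD !exprMn.
  set A := (1 - x) ^+ m.+1; set B := (1 + x) ^+ m.+1.
  ring.
set q := (1 - x) / (1 + x).
have q0 : 0 < q by apply: divr_gt0.
have q1 : q < 1 by rewrite ltr_pdivrMr //; lra.
rewrite -cvg_shiftS.
have E : forall m : nat,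
   - (ln (Zn J H beta m.+1) / (beta * m.+1%:R)) =
   - J - 2 / beta * ln (1 + x) - 2 / beta * (ln (1 + q ^+ m.+1) * harmonic m).
  move=> m.
  have qm : 0 < 1 + q ^+ m.+1 by rewrite addr_gt0 // exprn_gt0.
  rewrite Zn_eq2 -/x -/q; last by rewrite gt_eqF.
  have e0 : 0 < expR (beta * J) ^+ m.+1 by rewrite exprn_gt0 // expR_gt0.
  have e1 : 0 < (1 + x) ^+ m.+1 by rewrite exprn_gt0.
  have e2 : 0 < ((1 + x) ^+ m.+1 * (1 + q ^+ m.+1)) ^+ 2 by rewrite exprn_gt0 // mulr_gt0.
  rewrite lnM; [|by rewrite posrE|by rewrite posrE].
  have e3 : 0 < (1 + x) ^+ m.+1 * (1 + q ^+ m.+1) by rewrite mulr_gt0.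
  rewrite (lnXn _ (expR_gt0 _)) (expRK (beta * J)) (lnXn _ e3).
  rewrite lnM; [|by rewrite posrE|by rewrite posrE].
  have -> : harmonic m = (m.+1%:R)^-1 :> R by [].
  rewrite (lnXn _ a0) -(mulr_natr (beta * J)) -(mulr_natr (ln (1 + x))).
  rewrite -(mulr_natr (_ + _) 2).
  set N := m.+1%:R; set L1 := ln (1 + x); set L2 := ln _.
  have hm : (0:R) <= m%:R := ler0n _ _.
  field.
  by apply/andP; split; rewrite gt_eqF //; lra.
rewrite (eq_cvg _ _ E).
have Hq : `|q| < 1 by rewrite ger0_norm // ltW.
have U : (fun m => 1 + q ^+ m.+1) @ \oo --> (1:R).
  rewrite -[X in _ --> X]addr0; apply: cvgD; first exact: cvg_cst.
  by have := cvg_expr Hq; rewrite -cvg_shiftS.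
have L1 : (fun m => ln (1 + q ^+ m.+1)) @ \oo --> (0:R).
  rewrite -ln1; exact: (continuous_cvg _ (continuous_ln ltr01) U).
have L : (fun m => ln (1 + q ^+ m.+1) * harmonic m) @ \oo --> (0:R).
  rewrite -[X in _ --> X](mul0r 0); apply: cvgM; first exact: L1.
  exact: cvg_harmonic.
have G : (fun m => - J - 2 / beta * ln (1 + x) - 2 / beta * (ln (1 + q ^+ m.+1) * harmonic m))
   @ \oo --> (- J - 2 / beta * ln (1 + x) - 2 / beta * 0).
  apply: cvgB; first exact: cvg_cst.
  exact: cvgMl_tmp.
by rewrite mulr0 subr0 in G.
Qed.
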